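(* For every positive integer $n$, the number of ordered set partitions of $[n]$ into exactly $3$ blocks that avoid the pattern $123$ is $$\operatorname{op}_{n,3}(123) = \left(\frac{n^2}{8}+\frac{3n}{8}-2\right)2^n+3.$$
   Context: An ordered set partition of $[n]$ into $k$ blocks is a sequence $B_1/B_2/\cdots/B_k$ of nonempty, pairwise disjoint subsets of $[n]$ whose union is $[n]$; the order of the blocks matters, but not the order of elements within a block. For a permutation $\rho=\rho_1\cdots\rho_m\in\mathcal{S}_m$, an ordered partition $B_1/\cdots/B_k$ contains $\rho$ if there are block indices $i_1<i_2<\cdots<i_m$ and elements $b_j\in B_{i_j}$ such that $b_1\cdots b_m$ is order-isomorphic to $\rho$ (i.e. $b_a<b_c$ iff $\rho_a<\rho_c$); otherwise it avoids $\rho$. $\operatorname{op}_{n,k}(\rho)$ denotes the number of ordered partitions of $[n]$ into $k$ blocks that avoid $\rho$. *)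

(* Defs.v *)
From mathcomp Require Import all_boot all_order all_algebra all_fingroup.
Set Implicit Arguments. Unset Strict Implicit. Unset Printing Implicit Defensive.

(* The ground set [n] = {1,...,n} is represented by 'I_n = {0,...,n-1}
   (an order-isomorphic relabelling, which does not affect pattern containment). *)

Definition is_ordered_partition (n k : nat) (B : {ffun 'I_k -> {set 'I_n}}) : bool :=
  [forall i, B i != set0] &&
  [forall i, forall j, (i != j) ==> [disjoint B i & B j]] &&
  (\bigcup_(i < k) B i == [set: 'I_n]).

Definition op_contains (n k m : nat) (B : {ffun 'I_k -> {set 'I_n}}) (rho : 'S_m) : bool :=
  [exists I : {ffun 'I_m -> 'I_k}, exists b : {ffun 'I_m -> 'I_n},
     [forall a : 'I_m, forall c : 'I_m, (a < c)%N ==> (I a < I c)%N] &&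
     [forall j : 'I_m, b j \in B (I j)] &&
     [forall a : 'I_m, forall c : 'I_m, ((b a < b c)%N == (rho a < rho c)%N)]].

Definition op_count (n k m : nat) (rho : 'S_m) : nat :=
  #|[set B : {ffun 'I_k -> {set 'I_n}} |
       is_ordered_partition B && ~~ op_contains B rho]|.

(* Main.v *)
Require Import Defs.
From mathcomp Require Import all_boot all_order all_algebra all_fingroup.
From mathcomp Require Import ring zify.
Import GRing.Theory Num.Theory.
Set Implicit Arguments. Unset Strict Implicit. Unset Printing Implicit Defensive.

Definition o0 : 'I_3 := @Ordinal 3 0 isT.
Definition o1 : 'I_3 := @Ordinal 3 1 isT.
Definition o2 : 'I_3 := @Ordinal 3 2 isT.

Definition step (q : nat) (x : 'I_3) : nat := if nat_of_ord x == q then q.+1 else q.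
Fixpoint av q (s : seq 'I_3) : bool := if s is x :: s' then av (step q x) s' else q < 3.
Definition acc q (R : seq 'I_3) (s : seq 'I_3) := av q s && all (fun r => r \in s) R.
Definition F n q R := #|[pred t : n.-tuple 'I_3 | acc q R t]|.

Lemma card_tuple_cons (T : finType) n (P : seq T -> bool) :
  #|[pred t : n.+1.-tuple T | P t]| = \sum_(x : T) #|[pred t : n.-tuple T | P (x :: t)]|.
Proof.
rewrite -sum1_card.
rewrite (reindex (fun p : T * n.-tuple T => [tuple of p.1 :: p.2])); last first.
  exists (fun t : n.+1.-tuple T => (thead t, behead_tuple t)).
    by move=> [x t] _ /=; congr pair; apply: val_inj.
  by move=> t _; rewrite [in RHS](tuple_eta t).
rewrite -(pair_big_dep xpredT (fun x t => P (x :: val t)) (fun _ _ => 1%N)) /=.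
by apply: eq_bigr => x _; rewrite sum1_card.
Qed.

Lemma card_tuple0 (T : finType) (P : seq T -> bool) :
  #|[pred t : 0.-tuple T | P t]| = P [::].
Proof.
rewrite -sum1_card (eq_bigl (fun t : 0.-tuple T => (t == [tuple]) && P [::])).
  case: (P [::]); first by rewrite (eq_bigl (pred1 [tuple])) ?big_pred1_eq // => t; rewrite andbT.
  by rewrite big_pred0 // => t; rewrite andbF.
move=> t; rewrite inE /=; have -> : t == [tuple] by apply/eqP/tuple0.
by case: t => [[|]].
Qed.

Lemma acc_cons q R x s : acc q R (x :: s) = acc (step q x) (filter (predC1 x) R) s.
Proof.
rewrite /acc /=; congr andb; rewrite all_filter; apply: eq_all => r.
by rewrite in_cons /=; case: (r == x).
Qed.

Lemma FS n q R : F n.+1 q R =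
  (F n (step q o0) (filter (predC1 o0) R) + F n (step q o1) (filter (predC1 o1) R)
   + F n (step q o2) (filter (predC1 o2) R))%N.
Proof.
rewrite /F card_tuple_cons !big_ord_recl big_ord0 addn0 addnA.
by congr (_ + _ + _); apply: eq_card => t; rewrite inE /= acc_cons.
Qed.

Lemma F0 q R : F 0 q R = acc q R [::].
Proof. exact: card_tuple0. Qed.

Lemma av_subseq q s : av q s = ~~ subseq (drop q [:: o0; o1; o2]) s.
Proof.
elim: s q => [|x s IH] q; first by case: q => [|[|[|q]]].
rewrite /= IH; case: q => [|[|[|q]]]; case: x => [[|[|[|?]]] Hx] //=;
  rewrite /step /= ?sub0seq //.
Qed.

Lemma subseq_consP (T : eqType) (x0 x : T) s1 s :
  subseq (x :: s1) s <-> exists i, [/\ i < size s, nth x0 s i = x & subseq s1 (drop i.+1 s)].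
Proof.
elim: s => [|y s IH] /=; first by split=> // -[i []].
split.
  case: eqP => [->|_]; first by move=> H; exists 0; split; rewrite /= ?drop0.
  by case/IH=> i [H1 H2 H3]; exists i.+1; split.
case=> -[|i] [/= H1 H2 H3].
  by rewrite H2 eqxx drop0 in H3 *.
case: eqP => _; last by apply/IH; exists i.
exact: subseq_trans H3 (drop_subseq _ _).
Qed.

Definition pat3 (s : seq 'I_3) := exists a b c, [/\ a < b < c, c < size s,
  nth o0 s a = o0, nth o0 s b = o1 & nth o0 s c = o2].

Lemma subseq_pat3 s : subseq [:: o0; o1; o2] s <-> pat3 s.
Proof.
split.
  case/(@subseq_consP _ o0) => i [Hi Ha]; case/(@subseq_consP _ o0) => j [Hj Hb].
  case/(@subseq_consP _ o0) => k [Hk Hc _].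
  rewrite size_drop in Hj; rewrite drop_drop !size_drop in Hk.
  rewrite nth_drop in Hb; rewrite drop_drop nth_drop in Hc.
  exists i, (i.+1 + j), (j.+1 + i.+1 + k); split => //; [apply/andP; split|]; try lia; by rewrite -ltn_subRL.
case=> a [b [c [/andP[Hab Hbc] Hc Ha Hb Hc2]]].
apply/(@subseq_consP _ o0); exists a; split => //; first exact: ltn_trans Hab (ltn_trans Hbc Hc).
apply/(@subseq_consP _ o0); exists (b - a.+1); split.
- by rewrite size_drop ltn_subRL (_ : a.+1 + (b - a.+1) = b) ?(ltn_trans Hbc Hc) //; lia.
- by rewrite nth_drop (_ : a.+1 + (b - a.+1) = b) //; lia.
apply/(@subseq_consP _ o0); exists (c - b.+1); split => //.
- by rewrite drop_drop size_drop ltn_subRL (_ : (b - a.+1).+1 + a.+1 + (c - b.+1) = c) //; lia.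
by rewrite drop_drop nth_drop (_ : (b - a.+1).+1 + a.+1 + (c - b.+1) = c) //; lia.
by rewrite sub0seq.
Qed.

Definition pofw n (t : n.-tuple 'I_3) : {ffun 'I_3 -> {set 'I_n}} :=
  [ffun i => [set x | tnth t x == i]].

Lemma contains_pofw n (t : n.-tuple 'I_3) :
  op_contains (pofw t) (1 : 'S_3) = subseq [:: o0; o1; o2] t.
Proof.
apply/idP/idP.
  case/existsP => I /existsP [b /andP [/andP [HI Hb] Ho]].
  have h : forall x y : 'I_3, (x < y)%N -> (I x < I y)%N.
    by move=> x y xy; move: (forallP (forallP HI x) y); rewrite xy.
  have h01 := h o0 o1 isT; have h12 := h o1 o2 isT; have h2 := ltn_ord (I o2).
  have E0 : I o0 = o0.
    have e : nat_of_ord (I o0) = 0 by lia.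
    by apply: val_inj; rewrite /= e.
  have E1 : I o1 = o1.
    have e : nat_of_ord (I o1) = 1 by lia.
    by apply: val_inj; rewrite /= e.
  have E2 : I o2 = o2.
    have e : nat_of_ord (I o2) = 2 by lia.
    by apply: val_inj; rewrite /= e.
  have hb : forall j, tnth t (b j) = I j.
    by move=> j; move: (forallP Hb j); rewrite ffunE inE => /eqP.
  have ho : forall x y : 'I_3, (x < y)%N -> (b x < b y)%N.
    by move=> x y xy; move: (forallP (forallP Ho x) y); rewrite !perm1 xy => /eqP.
  apply/subseq_pat3; exists (b o0), (b o1), (b o2); split.
  - by rewrite (ho _ _ (isT : (o0 < o1)%N)) (ho _ _ (isT : (o1 < o2)%N)).
  - by rewrite size_tuple.
  - by rewrite -tnth_nth hb E0.
  - by rewrite -tnth_nth hb E1.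
  - by rewrite -tnth_nth hb E2.
case/subseq_pat3 => a [b [c [/andP[Hab Hbc] Hc Ha Hb Hc2]]].
rewrite size_tuple in Hc.
have Ha' : a < n by lia.
have Hb' : b < n by lia.
pose A := Ordinal Ha'; pose B := Ordinal Hb'; pose C := Ordinal Hc.
apply/existsP; exists [ffun j => j]; apply/existsP.
exists [ffun j : 'I_3 => if val j == 0 then A else if val j == 1 then B else C].
apply/andP; split; first (apply/andP; split).
- by apply/forallP => x; apply/forallP => y; rewrite !ffunE; apply/implyP.
- apply/forallP => -[[|[|[|?]]] Hj] //; rewrite !ffunE inE /= /=.
  + by rewrite (tnth_nth o0) Ha; apply/eqP/val_inj.
  + by rewrite (tnth_nth o0) Hb; apply/eqP/val_inj.
  + by rewrite (tnth_nth o0) Hc2; apply/eqP/val_inj.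
apply/forallP => -[[|[|[|?]]] Hj] //; apply/forallP => -[[|[|[|?]]] Hk] //;
  rewrite !ffunE !perm1 /=; apply/eqP; lia.
Qed.

Lemma pofw_inj n : injective (@pofw n).
Proof.
move=> t1 t2 E; apply: eq_from_tnth => x.
have := congr1 (fun B : {ffun 'I_3 -> {set 'I_n}} => x \in B (tnth t1 x)) E; rewrite !ffunE !inE eqxx.
by move/esym/eqP.
Qed.

Lemma mem_o012 (i : 'I_3) : i \in [:: o0; o1; o2].
Proof. by case: i => [[|[|[|?]]] ?] //; rewrite !inE -!val_eqE. Qed.

Lemma op_count_F n : op_count n 3 (1 : 'S_3) = F n 0 [:: o0; o1; o2].
Proof.
rewrite /op_count /F -(card_imset _ (@pofw_inj n)).
apply: eq_card => B; rewrite inE; apply/idP/imsetP.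
  case/andP => /andP[/andP[Hne Hdis] Hcov] Hnc.
  have Hin : forall x, exists i, x \in B i.
    move=> x; have : x \in \bigcup_(i < 3) B i by rewrite (eqP Hcov) inE.
    by case/bigcupP => i _ ?; exists i.
  have Huniq : forall x i j, x \in B i -> x \in B j -> i = j.
    move=> x i j Hi Hj; case: (eqVneq i j) => // ij.
    by move: (implyP (forallP (forallP Hdis i) j) ij) => /disjointFr /(_ Hi); rewrite Hj.
  pose blk x := odflt o0 [pick i | x \in B i].
  have Hblk : forall x, x \in B (blk x).
    move=> x; rewrite /blk; case: pickP => [i //|H].
    by have [i Hi] := Hin x; move: (H i); rewrite Hi.
  pose t : n.-tuple 'I_3 := [tuple blk x | x < n].
  have EB : B = pofw t.
    apply/ffunP => i; apply/setP => x; rewrite ffunE inE tnth_mktuple.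
    apply/idP/eqP => [Hx|<-]; [exact: (Huniq x _ _ (Hblk x) Hx) | exact: Hblk].
  exists t => //; rewrite inE /acc av_subseq drop0 -contains_pofw -EB Hnc andTb.
  apply/allP => i _; have /set0Pn [x Hx] := forallP Hne i.
  by move: Hx; rewrite EB ffunE inE => /eqP <-; apply: mem_tnth.
case=> t; rewrite inE /acc av_subseq drop0 => /andP [Hnc Hall] ->.
rewrite -contains_pofw in Hnc; rewrite Hnc andbT.
apply/andP; split; first (apply/andP; split).
- apply/forallP => i; have /tnthP [x Hx] := allP Hall i (mem_o012 i).
  by apply/set0Pn; exists x; rewrite ffunE inE Hx.
- apply/forallP => i; apply/forallP => j; apply/implyP => ij.
  rewrite -setI_eq0; apply/eqP/setP => x; rewrite !inE !ffunE !inE.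
  by case: eqP => // ->; rewrite (negbTE ij).
apply/eqP/setP => x; rewrite inE; apply/bigcupP; exists (tnth t x) => //.
by rewrite ffunE inE.
Qed.

Local Open Scope ring_scope.

Lemma F3 n R : F n 3 R = 0%N.
Proof. by elim: n R => [|n IH] R; rewrite ?F0 // FS !IH. Qed.

Notation Q n q R := ((F n q R)%:R : rat).
Notation P n := ((2:rat) ^+ n).

Lemma F2e n : Q n 2 [::] = P n.
Proof.
elim: n => [|n IH]; first by rewrite F0.
have -> : F n.+1 2 [::] = (F n 2 [::] + F n 2 [::] + F n 3 [::])%N by rewrite FS.
by rewrite F3 !natrD IH exprS; ring.
Qed.

Lemma F22 n : Q n 2 [:: o2] = 0.
Proof.
elim: n => [|n IH]; first by rewrite F0.
have -> : F n.+1 2 [::o2] = (F n 2 [::o2] + F n 2 [::o2] + F n 3 [::])%N by rewrite FS.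
by rewrite F3 !natrD IH; ring.
Qed.

Lemma F1e n : Q n 1 [::] = P n + n%:R * P n / 2.
Proof.
elim: n => [|n IH]; first by rewrite F0 /=; field.
have -> : F n.+1 1 [::] = (F n 1 [::] + F n 2 [::] + F n 1 [::])%N by rewrite FS.
rewrite !natrD IH F2e exprS -addn1 natrD; field; rewrite ?oner_eq0 //=.
Qed.

Lemma F11 n : Q n 1 [::o1] = n%:R * P n / 2.
Proof.
elim: n => [|n IH]; first by rewrite F0 /=; field.
have -> : F n.+1 1 [::o1] = (F n 1 [::o1] + F n 2 [::] + F n 1 [::o1])%N by rewrite FS.
rewrite !natrD IH F2e exprS -addn1 natrD; field; rewrite ?oner_eq0 //=.
Qed.

Lemma F12 n : Q n 1 [::o2] = n%:R * P n / 2.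
Proof.
elim: n => [|n IH]; first by rewrite F0 /=; field.
have -> : F n.+1 1 [::o2] = (F n 1 [::o2] + F n 2 [::o2] + F n 1 [::])%N by rewrite FS.
rewrite !natrD IH F22 F1e exprS -addn1 natrD; field; rewrite ?oner_eq0 //=.
Qed.

Lemma F112 n : Q n 1 [::o1; o2] = n%:R * P n / 2 - P n + 1.
Proof.
elim: n => [|n IH]; first by rewrite F0 /=; field.
have -> : F n.+1 1 [::o1;o2] = (F n 1 [::o1;o2] + F n 2 [::o2] + F n 1 [::o1])%N by rewrite FS.
rewrite !natrD IH F22 F11 exprS -addn1 natrD; field; rewrite ?oner_eq0 //=.
Qed.

Definition T n : rat := n%:R * P n / 2 + n%:R * (n%:R - 1) * P n / 8.

Lemma F00 n : Q n 0 [::o0] = T n.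
Proof.
rewrite /T; elim: n => [|n IH]; first by rewrite F0 /=; field.
have -> : F n.+1 0 [::o0] = (F n 1 [::] + F n 0 [::o0] + F n 0 [::o0])%N by rewrite FS.
rewrite !natrD IH F1e exprS -addn1 natrD; field; rewrite ?oner_eq0 //=.
Qed.

Lemma F001 n : Q n 0 [::o0; o1] = T n - P n + 1.
Proof.
rewrite /T; elim: n => [|n IH]; first by rewrite F0 /=; field.
have -> : F n.+1 0 [::o0;o1] = (F n 1 [::o1] + F n 0 [::o0] + F n 0 [::o0;o1])%N by rewrite FS.
rewrite !natrD IH F00 /T F11 exprS -addn1 natrD; field; rewrite ?oner_eq0 //=.
Qed.

Lemma F002 n : Q n 0 [::o0; o2] = T n - P n + 1.
Proof.
rewrite /T; elim: n => [|n IH]; first by rewrite F0 /=; field.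
have -> : F n.+1 0 [::o0;o2] = (F n 1 [::o2] + F n 0 [::o0;o2] + F n 0 [::o0])%N by rewrite FS.
rewrite !natrD IH F00 /T F12 exprS -addn1 natrD; field; rewrite ?oner_eq0 //=.
Qed.

Lemma F0all n : Q n.+1 0 [::o0; o1; o2] = T n.+1 - 2 * P n.+1 + 3.
Proof.
have -> : F n.+1 0 [::o0;o1;o2] = (F n 1 [::o1;o2] + F n 0 [::o0;o2] + F n 0 [::o0;o1])%N by rewrite FS.
rewrite !natrD F002 F001 /T F112 exprS -addn1 natrD; field; rewrite ?oner_eq0 //=.
Qed.


Theorem theorem2 (n : nat) (hn : (0 < n)%N) :
  ((op_count n 3 (1 : 'S_3))%:R : rat)
  = ((n%:R ^+ 2 / 8 + 3 * n%:R / 8 - 2) * 2 ^+ n + 3 : rat).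
Proof.
case: n hn => // n _.
rewrite op_count_F F0all /T; field; rewrite ?oner_eq0 //=.
Qed.
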